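(* Let $G$ be a group of finite order $n$ whose Sylow $2$-subgroups are non-trivial and cyclic. Then the Cayley table of $G$ contains no $k$-plex for any odd $k$, but the Cayley table has a $2$-partition, and hence contains a $k$-plex for every even $k$ with $0\le k\le n$.
   Context: The Cayley table of a finite group $G$ is the latin square with rows and columns indexed by the elements of $G$ whose entry in row $x$, column $y$ is $xy$. A $k$-plex in a latin square of order $n$ is a set of $kn$ cells containing exactly $k$ cells from each row, exactly $k$ cells from each column, and exactly $k$ occurrences of each symbol. A $2$-partition of a latin square is a partition of its set of cells into pairwise disjoint $2$-plexes. *)

(* Defs.v *)
From mathcomp Require Import all_boot all_fingroup all_solvable.
Set Implicit Arguments. Unset Strict Implicit. Unset Printing Implicit Defensive.

(* Cayley table of the finite group gT: cells are pairs (x, y) : gT * gT,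
   entry in row x, column y is x * y. *)

Definition is_kplex (gT : finGroupType) (k : nat) (P : {set gT * gT}) : Prop :=
  [/\ #|P| = k * #|gT|,
      forall x : gT, #|[set c in P | c.1 == x]| = k,
      forall y : gT, #|[set c in P | c.2 == y]| = k &
      forall z : gT, #|[set c in P | (c.1 * c.2)%g == z]| = k].

Definition is_two_partition (gT : finGroupType) (Q : {set {set gT * gT}}) : Prop :=
  partition Q [set: gT * gT] /\ forall P, P \in Q -> is_kplex 2 P.

(* Main.v *)
Require Import Defs.
From mathcomp Require Import all_boot all_fingroup all_solvable.
From Stdlib Require Import Lia.
Set Implicit Arguments. Unset Strict Implicit. Unset Printing Implicit Defensive.

Module MA.
Local Open Scope group_scope.

Definition rfun (gT : finGroupType) (H : {group gT}) (x z : gT) : gT :=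
  if z \in H then z * (if x \in H then x else 1) else z.

Lemma rfun_inj (gT : finGroupType) (H : {group gT}) x : injective (rfun H x).
Proof.
rewrite /rfun; have xH : (if x \in H then x else 1) \in H by case: ifP.
move: (if x \in H then x else 1) xH => a aH.
move=> z1 z2; case: ifP => h1; case: ifP => h2.
- exact: mulIg.
- by move=> e; move: h2; rewrite -e groupM.
- by move=> e; move: h1; rewrite e groupM.
- by [].
Qed.

Definition rperm (gT : finGroupType) (H : {group gT}) x : {perm gT} :=
  perm (@rfun_inj gT H x).

Lemma rpermE (gT : finGroupType) (H : {group gT}) x z :
  rperm H x z = if z \in H then z * (if x \in H then x else 1) else z.
Proof. by rewrite /rperm permE. Qed.

Lemma rpermM (gT : finGroupType) (H : {group gT}) x y : x \in H -> y \in H ->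
  rperm H (x * y) = rperm H x * rperm H y.
Proof.
move=> xH yH; apply/permP => z; rewrite permM !rpermE groupM // xH yH.
by case: ifP => zH; rewrite ?groupM ?zH ?mulgA.
Qed.

Definition sgnH (gT : finGroupType) (H : {group gT}) x := odd_perm (rperm H x).

Lemma sgnHM (gT : finGroupType) (H : {group gT}) x y : x \in H -> y \in H ->
  sgnH H (x * y) = sgnH H x (+) sgnH H y.
Proof. by move=> xH yH; rewrite /sgnH rpermM // odd_permM. Qed.

Lemma sgnH1 (gT : finGroupType) (H : {group gT}) : sgnH H 1 = false.
Proof.
have : sgnH H (1 * 1) = sgnH H 1 (+) sgnH H 1 by rewrite sgnHM.
by rewrite mulg1 addbb; case: (sgnH H 1).
Qed.

Lemma sgnHV (gT : finGroupType) (H : {group gT}) x : x \in H ->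
  sgnH H x^-1 = sgnH H x.
Proof.
move=> xH; have : sgnH H (x^-1 * x) = sgnH H x^-1 (+) sgnH H x by rewrite sgnHM ?groupV.
by rewrite mulVg sgnH1; case: (sgnH H x^-1); case: (sgnH H x).
Qed.

Definition kerH (gT : finGroupType) (H : {group gT}) := [set x in H | ~~ sgnH H x].

Lemma kerH_group_set (gT : finGroupType) (H : {group gT}) : group_set (kerH H).
Proof.
apply/group_setP; split; first by rewrite inE group1 sgnH1.
move=> x y; rewrite !inE => /andP[xH sx] /andP[yH sy].
by rewrite groupM // sgnHM // (negbTE sx) (negbTE sy).
Qed.

Canonical kerH_group (gT : finGroupType) (H : {group gT}) := Group (kerH_group_set H).

Lemma sgnHJ (gT : finGroupType) (H : {group gT}) x y :
  y \in 'N(H) -> x \in H -> sgnH H (x ^ y) = sgnH H x.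
Proof.
move=> nH xH.
have xyH : x ^ y \in H by rewrite memJ_norm.
pose c : {perm gT} := perm (can_inj (conjgK y)).
rewrite /sgnH; suff -> : rperm H (x ^ y) = rperm H x ^ c by rewrite odd_permJ.
apply/permP => w; rewrite -(conjgKV y w).
have E : (w ^ y^-1) ^ y = c (w ^ y^-1) by rewrite /c permE.
rewrite E permJ /c permE !rpermE xH xyH memJ_norm //.
rewrite permE; case: (w ^ y^-1 \in H) => //; by rewrite -conjMg.
Qed.

Lemma rpermX (gT : finGroupType) (H : {group gT}) g z i : g \in H -> z \in H ->
  (rperm H g ^+ i) z = z * g ^+ i.
Proof.
move=> gH zH; elim: i => [|i IH]; first by rewrite expg0 perm1 expg0 mulg1.
rewrite expgSr permM IH rpermE groupM ?groupX // gH expgSr mulgA //.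
Qed.

Lemma porbit_in (gT : finGroupType) (H : {group gT}) g z : g \in H -> z \in H ->
  porbit (rperm H g) z = z *: <[g]>.
Proof.
move=> gH zH; apply/setP => w; apply/porbitP/lcosetP.
- case=> i ->; exists (g ^+ i); first by rewrite mem_cycle.
  by rewrite rpermX.
- case=> a /cycleP[i ->] ->; exists i.
  by rewrite rpermX.
Qed.

Lemma porbit_out (gT : finGroupType) (H : {group gT}) g z : z \notin H ->
  porbit (rperm H g) z = [set z].
Proof.
move=> zH; apply/setP => w; rewrite inE; apply/porbitP/eqP.
- by case=> i ->; rewrite permX_fix // rpermE (negbTE zH).
- by move=> ->; exists 0; rewrite expg0 perm1.
Qed.

Lemma card_porbits (gT : finGroupType) (H : {group gT}) g : g \in H ->
  #|porbits (rperm H g)| = #|H : <[g]>| + #|~: H|.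
Proof.
move=> gH.
have -> : porbits (rperm H g) = porbit (rperm H g) @: (H :|: ~: H).
  by rewrite setUCr; apply/setP => o; apply/imsetP/imsetP; case=> z _ ->; exists z.
rewrite imsetU cardsU.
have -> : porbit (rperm H g) @: H = lcosets <[g]> H.
  by rewrite /lcosets; apply: eq_in_imset => z zH; rewrite porbit_in // lcosetE.
have E2 : {in ~: H, porbit (rperm H g) =1 set1} by move=> w; rewrite inE => wH; rewrite porbit_out. rewrite (eq_in_imset E2).
rewrite card_lcosets card_imset; last exact: set1_inj.
suff -> : lcosets <[g]> H :&: [set [set x] | x in ~: H] = set0 by rewrite cards0 subn0.
apply/setP => o; rewrite !inE; apply/andP; case=> /imsetP[z zH ->] /imsetP[w].
rewrite inE => wH ez.
have : z \in lcoset <[g]> z by rewrite lcosetE; apply/lcosetP; exists 1; rewrite ?mulg1.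
by rewrite ez inE => /eqP zw; move: wH; rewrite -zw zH.
Qed.

Lemma sgnH_g (gT : finGroupType) (H : {group gT}) g b : g \in H ->
  #[g] = (2 ^ b.+1)%N -> odd (#|H| %/ 2 ^ b.+1)%N -> sgnH H g.
Proof.
move=> gH og oddi; rewrite /sgnH /odd_perm card_porbits //.
rewrite -divgS ?cycle_subG // -orderE og.
have -> : #|~: H| = #|gT| - #|H| by rewrite -(cardsC H) addKn.
have evH : ~~ odd #|H|.
  have : 2 %| #|H|.
    apply: dvdn_trans (order_dvdG gH); rewrite og expnS; exact: dvdn_mulr.
  by rewrite dvdn2.
rewrite oddD oddB ?max_card // oddi (negbTE evH).
by case: (odd #|gT|).
Qed.

Lemma card_kerH (gT : finGroupType) (H : {group gT}) g : g \in H -> sgnH H g ->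
  (#|kerH H| * 2)%N = #|H|.
Proof.
move=> gH sg.
have sKH : kerH H \subset H by apply/subsetP => x; rewrite inE => /andP[].
have E : H :\: kerH H = (fun x => x * g) @: kerH H.
  apply/setP => x; rewrite !inE; apply/andP/imsetP.
  - case=> /negP nk xH; exists (x * g^-1); last by rewrite mulgKV.
    rewrite inE groupM ?groupV //= sgnHM ?groupV // sgnHV // sg.
    by case: (sgnH H x) nk => //; rewrite xH.
  - case=> y; rewrite inE => /andP[yH sy] ->; split; last by rewrite groupM.
    by rewrite groupM // sgnHM // sg (negbTE sy).
rewrite -(cardsID (kerH H) H) (setIidPr sKH) E card_imset ?muln2 ?addnn //.
exact: mulIg.
Qed.

Lemma compl_ex (gT : finGroupType) b : forall (H : {group gT}) g,
  (forall y, y \in 'N(H)) -> g \in H -> #[g] = (2 ^ b)%N ->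
  odd (#|H| %/ 2 ^ b)%N ->
  exists N : {group gT}, [/\ forall y, y \in 'N(N), N \subset H, odd #|N|
                           & (#|N| * 2 ^ b)%N = #|H| ].
Proof.
elim: b => [|b IH] H g nH gH og oddH.
  by exists H; rewrite expn0 muln1; rewrite expn0 divn1 in oddH.
have sg : sgnH H g by apply: sgnH_g og oddH.
have sKH : kerH H \subset H by apply/subsetP => x; rewrite inE => /andP[].
have cK := card_kerH gH sg.
have nK : forall y, y \in 'N(kerH H).
  move=> y; apply/normP; apply/eqP; rewrite eqEcard cardJg leqnn andbT.
  apply/subsetP => x; rewrite mem_conjg !inE => /andP[xH sx].
  have -> : x = (x ^ y^-1) ^ y by rewrite conjgKV.
  by rewrite memJ_norm // xH /= sgnHJ.
have g2K : g ^+ 2 \in kerH H.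
  by rewrite inE groupX //= expgS expg1 sgnHM // sg.
have og2 : #[g ^+ 2] = (2 ^ b)%N.
  by rewrite orderXdiv og ?expnS ?mulKn // dvdn_mulr.
have oddK : odd (#|kerH H| %/ 2 ^ b)%N.
  by rewrite -(@divnMr 2) // -expnSr cK.
have [N [nN sNK oN cN]] := IH (kerH_group H) (g ^+ 2) nK g2K og2 oddK.
exists N; split => //; first exact: subset_trans sNK sKH.
by rewrite expnSr mulnA cN.
Qed.

Lemma structure (gT : finGroupType)
  (hSyl : forall S : {group gT}, S \in ('Syl_2([set: gT]))%g ->
            (S :!=: 1)%g /\ cyclic S) :
  exists (N : {group gT}) (g : gT), [/\ forall y, y \in 'N(N), odd #|N|,
     ~~ odd #[g], coprime #|N| #[g] & (#|N| * #[g])%N = #|gT| ].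
Proof.
have [S sylS] := Sylow_exists 2 [set: gT].
have [ntS /cyclicP[g defS]] : (S :!=: 1) /\ cyclic S by apply: hSyl; rewrite inE.
have oS : #|S| = (2 ^ logn 2 #|gT|)%N by rewrite (card_Hall sylS) cardsT p_part.
set e := logn 2 #|gT| in oS.
have og : #[g] = (2 ^ e)%N by rewrite orderE -defS.
have e0 : e != 0%N.
  apply/eqP => e0; move: ntS; rewrite trivg_card1 oS e0 expn0; by case/negP.
have n0 : (0 < #|gT|)%N by rewrite (cardD1 1) inE.
have oddq : odd (#|[set: gT]| %/ 2 ^ e)%N.
  rewrite cardsT; case ev: (odd _) => //.
  have : (2 ^ e.+1 %| #|gT|)%N.
    rewrite -(divnK (pfactor_dvdnn 2 #|gT|)) -/e expnSr mulnC dvdn_pmul2r.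
    + by rewrite dvdn2 ev.
    + by rewrite expn_gt0.
  by rewrite pfactor_dvdn // ltnn.
have [N [nN _ oN cN]] :=
  compl_ex (H := [set: gT]%G) (fun y => (ltac:(by rewrite normT inE))) (in_setT g) og oddq.
exists N, g; split => //; last by rewrite og cN cardsT.
  2: by rewrite og; apply: coprimeXr; rewrite coprimen2.
rewrite og; move: e0; case: (e) => // e0 _; by rewrite expnS mul2n odd_double.
Qed.

End MA.
Import MA.

Module MB.
Local Open Scope group_scope.

Lemma sum_fiber (T rT : finType) (P : {set T}) (phi : T -> rT) k (h : rT -> nat) :
  (forall z, #|[set c in P | phi c == z]| = k) ->
  (\sum_(c in P) h (phi c) = k * \sum_z h z)%N.
Proof.
move=> hk; rewrite (partition_big phi xpredT) //= big_distrr /=.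
apply: eq_bigr => z _.
rewrite (eq_bigr (fun _ => h z)); last by move=> c /andP[_ /eqP ->].
rewrite sum_nat_const -(hk z); congr (_ * _)%N.
by apply: eq_card => c; rewrite inE.
Qed.

Section Cplx.
Variables (gT : finGroupType) (N : {group gT}) (g : gT).
Hypotheses (nN : forall y, y \in 'N(N)) (oN : odd #|N|) (evg : ~~ odd #[g])
  (coNg : coprime #|N| #[g]) (cN : (#|N| * #[g])%N = #|gT|).

Lemma TI : N :&: <[g]> = 1.
Proof. by apply: coprime_TIg; rewrite -orderE. Qed.

Lemma NgT : N * <[g]> = [set: gT].
Proof.
apply/eqP; rewrite eqEcard subsetT cardsT TI_cardMg ?TI // -orderE cN; exact: leqnn.
Qed.

Lemma m_gt0 : (0 < #[g])%N.
Proof. exact: order_gt0. Qed.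

Definition f x : nat :=
  if [pick i : 'I_#[g] | x * (g ^+ i)^-1 \in N] is Some i then val i else 0%N.

Lemma f_ex x : exists2 i, (i < #[g])%N & x * (g ^+ i)^-1 \in N.
Proof.
have : x \in N * <[g]> by rewrite NgT inE.
case/mulsgP => u h uN /cyclePmin[i lti ->] ->.
by exists i => //; rewrite mulgK.
Qed.

Lemma f_uniq x i j : (i < #[g])%N -> (j < #[g])%N ->
  x * (g ^+ i)^-1 \in N -> x * (g ^+ j)^-1 \in N -> i = j.
Proof.
move=> li lj hi hj.
have : (x * (g ^+ i)^-1)^-1 * (x * (g ^+ j)^-1) \in N :&: <[g]>.
  rewrite inE groupM ?groupV //= invMg invgK mulgA mulgKV.
  by rewrite groupM ?groupV // mem_cycle.
rewrite TI inE invMg invgK mulgA mulgKV => /eqP e.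
have : g ^+ i == g ^+ j by rewrite -(mulgKV (g ^+ j) (g ^+ i)) e mul1g.
by rewrite eq_expg_mod_order !modn_small // => /eqP.
Qed.

Lemma f_lt x : (f x < #[g])%N.
Proof. by rewrite /f; case: pickP => [i _|_]; [exact: ltn_ord | exact: order_gt0]. Qed.

Lemma f_in x : x * (g ^+ f x)^-1 \in N.
Proof.
rewrite /f; case: pickP => [i //|].
by have [i lti hi] := f_ex x => /(_ (Ordinal lti)); rewrite hi.
Qed.

Lemma fE x j : (j < #[g])%N -> x * (g ^+ j)^-1 \in N -> f x = j.
Proof. by move=> lj hj; apply: f_uniq (f_lt x) lj (f_in x) hj. Qed.

Lemma fM x y : f (x * y) = ((f x + f y) %% #[g])%N.
Proof.
apply: fE; first by rewrite ltn_mod m_gt0.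
rewrite expg_mod_order expgD invMg.
have -> : x * y * ((g ^+ f y)^-1 * (g ^+ f x)^-1) =
          (x * (g ^+ f x)^-1) * ((y * (g ^+ f y)^-1) ^ (g ^+ f x)^-1).
  by rewrite /conjg invgK !mulgA mulgKV.
by rewrite groupM ?f_in // memJ_norm ?f_in.
Qed.

Lemma sum_f : (\sum_z f z = #|N| * 'C(#[g], 2))%N.
Proof.
rewrite (partition_big (fun z => Ordinal (f_lt z)) xpredT) //=.
rewrite -bin2_sum big_mkord big_distrr /=.
apply: eq_bigr => i _.
rewrite (eq_bigr (fun _ => val i)); last by move=> z /eqP <-.
rewrite sum_nat_const; congr (_ * _)%N.
rewrite -(card_rcoset N (g ^+ i)); apply: eq_card => z.
rewrite mem_rcoset unfold_in /=; apply/eqP/idP.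
- by move=> <-; exact: f_in.
- by move=> h; apply: fE.
Qed.

End Cplx.

End MB.
Import MB.

Module MAr.
Lemma eqn_double m n : (m.*2 == n.*2) = (m == n).
Proof. by apply/eqP/eqP => [/double_inj|->]. Qed.

Lemma A1 m i j e : i < m -> j < m -> e < m ->
  ((j + m - i) %% m == e) = (j == (i + e) %% m).
Proof.
move=> li lj le.
have iJ : i <= j + m by apply: leq_trans (ltnW li) (leq_addl j m).
rewrite -{1}(modn_small le) -(eqn_modDr i) subnK // modnDr.
by rewrite (modn_small lj) addnC.
Qed.

Lemma B1 m i j e : i < m -> j < m -> e < m ->
  ((j + m - i) %% m == e) = (i == (j + m - e) %% m).
Proof.
move=> li lj le; rewrite A1 //.
have eJ : e <= j + m by apply: leq_trans (ltnW le) (leq_addl j m).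
have -> : (i == (j + m - e) %% m) = (i + e == j + m %[mod m]).
  by rewrite -{1}(modn_small li) -(eqn_modDr e i (j + m - e)) subnK.
by rewrite -{1}(modn_small lj) -(modnDr j m) eq_sym.
Qed.

Lemma A2 d a : (d./2 == a) = (d == a.*2) || (d == a.*2.+1).
Proof.
have F1 x y : (x.*2 == y.*2.+1) = false.
  by apply/negbTE; apply/negP => /eqP /(congr1 odd); rewrite /= !odd_double.
have F2 x y : (x.*2.+1 == y.*2) = false.
  by apply/negbTE; apply/negP => /eqP /(congr1 odd); rewrite /= !odd_double.
rewrite -{2 3}(odd_double_half d); case: (odd d) => /=.
- by rewrite add1n eqSS eqn_double F2.
- by rewrite add0n eqn_double F1 orbF.
Qed.

Lemma rowA m i j a : i < m -> j < m -> a.*2.+1 < m ->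
  (((j + m - i) %% m)./2 == a) = (j == (i + a.*2) %% m) || (j == (i + a.*2.+1) %% m).
Proof. by move=> li lj la; rewrite A2 !A1 // ltnW. Qed.

Lemma colA m i j a : i < m -> j < m -> a.*2.+1 < m ->
  (((j + m - i) %% m)./2 == a) =
  (i == (j + m - a.*2) %% m) || (i == (j + m - a.*2.+1) %% m).
Proof. by move=> li lj la; rewrite A2 !B1 // ltnW. Qed.

Lemma symA m h s i j a : m = h.*2 -> i < m -> j < m -> (i + j) %% m = s -> a < h ->
  (((j + m - i) %% m)./2 == a) =
  (i == ((s + m - (a.*2 + odd s)) %% m)./2) ||
  (i == ((s + m - (a.*2 + odd s)) %% m)./2 + h).
Proof.
move=> hm li lj hs la.
have m0 : 0 < m by apply: leq_ltn_trans li.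
have ls : s < m by rewrite -hs ltn_pmod.
have evm : odd m = false by rewrite hm odd_double.
set e := a.*2 + odd s.
have la2 : a.*2.+1 < m.
  rewrite hm; apply: leq_trans (_ : a.+1.*2 <= _); [by rewrite doubleS | by rewrite leq_double].
have le : e < m by rewrite /e; case: (odd s); rewrite ?addn1 ?addn0 // ltnW.
set d := (j + m - i) %% m.
have iJ : i <= j + m by apply: leq_trans (ltnW li) (leq_addl j m).
have od : odd d = odd s.
  rewrite /d odd_mod // oddB // oddD evm -hs odd_mod // oddD addbF.
  by case: (odd i); case: (odd j).
have -> : (d./2 == a) = (d == e).
  rewrite -{2}(odd_double_half d) od /e addnC eqn_add2r eqn_double //.
rewrite /d A1 //.
have -> : (j == (i + e) %% m) = (s + m - e == i.*2 %[mod m]).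
  rewrite -{1}(modn_small lj) -(eqn_modDl i) hs -{1}(modn_small ls) -(modnDr s m).
  have eS : e <= s + m by apply: leq_trans (ltnW le) (leq_addl s m).
  by rewrite -{1}(subnK eS) addnA -addnn eqn_modDr.
set w := (s + m - e) %% m.
have ow : odd w = false.
  rewrite /w odd_mod // oddB ?oddD ?evm; last by apply: leq_trans (ltnW le) (leq_addl s m).
  by rewrite odd_double /=; case: (odd s).
have hw : w = (w./2).*2 by rewrite -{1}(odd_double_half w) ow.
have lw : w./2 < h by rewrite -ltn_double -hw -hm /w ltn_pmod.
rewrite [X in X == _]hw hm -!mul2n -muln_modr eqn_pmul2l //.
set i1 := w./2 in lw *.
have lih : i < h.*2 by rewrite -hm.
case: (ltnP i h) => hi.
- rewrite (modn_small hi) eq_sym.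
  have -> : (i == i1 + h) = false by apply/negbTE; rewrite neq_ltn ltn_addl.
  by rewrite orbF.
- have -> : i %% h = i - h.
    rewrite -{1}(subnK hi) modnDr modn_small //.
    by rewrite ltn_subLR // addnn.
  have -> : (i == i1) = false by apply/negbTE; rewrite neq_ltn (leq_trans lw hi) orbT.
  rewrite /=; apply/eqP/eqP => [->|->]; [by rewrite subnK | by rewrite addnK].
Qed.

End MAr.
Import MAr.

Module MC.
Local Open Scope group_scope.

Section Part1.
Variables (gT : finGroupType) (N : {group gT}) (g : gT).
Hypotheses (nN : forall y, y \in 'N(N)) (oN : odd #|N|) (evg : ~~ odd #[g])
  (coNg : coprime #|N| #[g]) (cN : (#|N| * #[g])%N = #|gT|).

Local Notation f := (f N g).

Lemma no_odd_plex k (P : {set gT * gT}) : odd k -> ~ is_kplex k P.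
Proof.
move=> ok [_ hr hc hs].
have S1 := @sum_fiber _ _ P _ k f hr.
have S2 := @sum_fiber _ _ P _ k f hc.
have S3 := @sum_fiber _ _ P _ k f hs.
have E : (\sum_(c in P) f (c.1 * c.2)%g = \sum_(c in P) f c.1 + \sum_(c in P) f c.2 %[mod #[g]])%N.
  rewrite -big_split /= (eq_bigr (fun c => (f c.1 + f c.2) %% #[g])%N).
    by rewrite modn_summ.
  by move=> c _; rewrite fM.
rewrite S1 S2 S3 -[X in (X = _ %[mod _])%N]addn0 in E.
move/eqP: E; rewrite eqn_modDl mod0n eq_sym => /eqP. rewrite -/(dvdn _ _) => hd.
have m0 := order_gt0 g.
have hm : #[g] = ((#[g])./2).*2 by rewrite halfK (negbTE evg) subn0.
set m' := (#[g])./2 in hm.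
have m'0 : (0 < m')%N by move: m0; rewrite hm double_gt0.
have hd' : (#[g] %| k * \sum_z f z)%N by rewrite /dvdn hd.
move: hd'; rewrite sum_f // bin2 {1 2}hm -doubleMl doubleK.
have -> : (k * (#|N| * (m' * (#[g]).-1)) = (k * #|N| * (#[g]).-1) * m')%N.
  by rewrite -!multE; lia.
rewrite -mul2n dvdn_pmul2r // dvdn2 !oddM ok oN /=.
have -> : (#[g]).-1 = (#[g] - 1)%N by rewrite subn1.
by rewrite oddB // (negbTE evg).
Qed.
End Part1.

End MC.
Import MC.

Module MD.
Local Open Scope group_scope.

Lemma solve_mid (gT : finGroupType) (a y b t : gT) :
  (a * y * b == t) = (y == a^-1 * t * b^-1).
Proof.
apply/eqP/eqP => [<-|->]; first by rewrite !mulgA mulgK mulVg mul1g.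
by rewrite !mulgA mulgKV mulgV mul1g.
Qed.

Section Part2.
Variables (gT : finGroupType) (N : {group gT}) (g : gT).
Hypotheses (nN : forall y, y \in 'N(N)) (oN : odd #|N|) (evg : ~~ odd #[g])
  (coNg : coprime #|N| #[g]) (cN : (#|N| * #[g])%N = #|gT|).

Local Notation f := (f N g).
Local Notation m := #[g].

Definition W (y : gT) (i : nat) := g ^+ i * y * (g ^+ (i + f y))^-1.

Definition tau (c : gT * gT) : gT := g ^+ f c.1 * c.1^-1 * W c.2 (f c.1).

Definition dlt (c : gT * gT) := ((f c.2 + m - f c.1) %% m)%N.

Definition lab (c : gT * gT) := ((dlt c)./2, tau c).

Lemma f_in' x : x * (g ^+ f x)^-1 \in N.
Proof. exact: f_in. Qed.

Lemma f_lt' x : (f x < m)%N.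
Proof. exact: f_lt. Qed.

Lemma fE' x j : (j < m)%N -> x * (g ^+ j)^-1 \in N -> f x = j.
Proof. exact: fE. Qed.

Lemma gfx_in x : g ^+ f x * x^-1 \in N.
Proof. by rewrite -[g ^+ f x]invgK -invMg groupV f_in'. Qed.

Lemma W_in y i : W y i \in N.
Proof.
rewrite /W expgD invMg.
have -> : g ^+ i * y * ((g ^+ f y)^-1 * (g ^+ i)^-1) =
          (y * (g ^+ f y)^-1) ^ (g ^+ i)^-1.
  by rewrite /conjg invgK !mulgA.
by rewrite memJ_norm ?f_in'.
Qed.

Lemma tau_in c : tau c \in N.
Proof. by rewrite /tau groupM ?gfx_in ?W_in. Qed.

Lemma lt_m_1 : (1 < m)%N.
Proof.
have := order_gt0 g; case: #[g] evg => // [[]] //.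
Qed.


Lemma neq_mod_succ i e : (e.+1 < m)%N -> ((i + e) %% m != (i + e.+1) %% m)%N.
Proof.
move=> le; rewrite eqn_modDl !modn_small ?(ltnW le) //.
by rewrite neq_ltn ltnSn.
Qed.

Definition Yr t x j := (g ^+ f x * x^-1 * g ^+ f x)^-1 * t * g ^+ (f x + j).

Lemma tau_row x y :
  tau (x, y) = (g ^+ f x * x^-1 * g ^+ f x) * y * (g ^+ (f x + f y))^-1.
Proof. by rewrite /tau /W /= !mulgA. Qed.

Lemma f_Yr t x j : t \in N -> (j < m)%N -> f (Yr t x j) = j.
Proof.
move=> tN lj; apply: fE' => //.
have -> : Yr t x j * (g ^+ j)^-1 = ((x * (g ^+ f x)^-1) * t) ^ (g ^+ f x).
  by rewrite /Yr /conjg expgD !invMg !invgK !mulgA mulgK.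
by rewrite memJ_norm // groupM ?f_in'.
Qed.

Lemma tau_Yr t x j : t \in N -> (j < m)%N -> tau (x, Yr t x j) = t.
Proof.
move=> tN lj; rewrite tau_row f_Yr //; apply/eqP; rewrite solve_mid /Yr invgK //.
Qed.

Lemma tau_row_eq t x y : tau (x, y) = t -> y = Yr t x (f y).
Proof.
move=> h; apply/eqP; rewrite /Yr -[g ^+ (f x + f y)]invgK -solve_mid -tau_row h //.
Qed.

Lemma row_count a t x : t \in N -> (a.*2.+1 < m)%N ->
  #|[set c in [set d | lab d == (a, t)] | c.1 == x]| = 2.
Proof.
move=> tN la.
set j1 := ((f x + a.*2) %% m)%N; set j2 := ((f x + a.*2.+1) %% m)%N.
have lj1 : (j1 < m)%N by rewrite ltn_pmod // order_gt0.
have lj2 : (j2 < m)%N by rewrite ltn_pmod // order_gt0.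
have -> : [set c in [set d | lab d == (a, t)] | c.1 == x] =
          [set (x, Yr t x j1); (x, Yr t x j2)].
  apply/setP => [[x' y]]; rewrite !inE /= !xpair_eqE.
  case: (eqVneq x' x) => [->|_]; last by rewrite !andbF.
  rewrite andbT /=; apply/andP/orP.
  - case=> hd /eqP ht; have ey := tau_row_eq ht.
    move: hd; rewrite /dlt /= rowA ?f_lt' // => /orP[] /eqP hj.
    + by left; rewrite ey hj.
    + by right; rewrite ey hj.
  - case=> /eqP ->; rewrite tau_Yr // eqxx /dlt /= f_Yr // rowA ?f_lt' //; split => //.
    + by rewrite /j1 eqxx.
    + by rewrite /j2 eqxx orbT.
rewrite cards2; congr (_.+1); apply/eqP; rewrite eqb1.
apply/negP => /eqP [] /(congr1 f); rewrite !f_Yr // => /eqP.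
by apply/negP; apply: neq_mod_succ.
Qed.


Definition Xc t y i := W y i * t^-1 * g ^+ i.

Lemma f_Xc t y i : t \in N -> (i < m)%N -> f (Xc t y i) = i.
Proof.
move=> tN li; apply: fE' => //; rewrite /Xc mulgK.
by rewrite groupM ?groupV ?W_in.
Qed.

Lemma tau_Xc t y i : t \in N -> (i < m)%N -> tau (Xc t y i, y) = t.
Proof.
move=> tN li; rewrite /tau /= f_Xc // /Xc !invMg !invgK !mulgA mulgV mul1g mulgKV. rewrite mulgKV; exact: mulgK.
Qed.

Lemma tau_col_eq t x y : tau (x, y) = t -> x = Xc t y (f x).
Proof.
rewrite /tau /= => h.
have : g ^+ f x * x^-1 * W y (f x) == t by rewrite h.
rewrite solve_mid => /eqP hx.
by rewrite -[LHS]invgK hx /Xc !invMg !invgK mulgA.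
Qed.

Lemma col_count a t y : t \in N -> (a.*2.+1 < m)%N ->
  #|[set c in [set d | lab d == (a, t)] | c.2 == y]| = 2.
Proof.
move=> tN la.
set i1 := ((f y + m - a.*2) %% m)%N; set i2 := ((f y + m - a.*2.+1) %% m)%N.
have li1 : (i1 < m)%N by rewrite ltn_pmod // order_gt0.
have li2 : (i2 < m)%N by rewrite ltn_pmod // order_gt0.
have -> : [set c in [set d | lab d == (a, t)] | c.2 == y] =
          [set (Xc t y i1, y); (Xc t y i2, y)].
  apply/setP => [[x y']]; rewrite !inE /= !xpair_eqE.
  case: (eqVneq y' y) => [->|_]; last by rewrite !andbF.
  rewrite !andbT /=; apply/andP/orP.
  - case=> hd /eqP ht; have ex := tau_col_eq ht.
    move: hd; rewrite /dlt /= colA ?f_lt' // => /orP[] /eqP hi.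
    + by left; rewrite ex hi.
    + by right; rewrite ex hi.
  - case=> /eqP ->; rewrite tau_Xc // eqxx /dlt /= f_Xc // colA ?f_lt' //; split => //.
    + by rewrite /i1 eqxx.
    + by rewrite /i2 eqxx orbT.
rewrite cards2; congr (_.+1); apply/eqP; rewrite eqb1.
apply/negP => /eqP [] /(congr1 f); rewrite !f_Xc // => /eqP.
have hK : (a.*2.+1 < f y + m)%N by apply: leq_trans la (leq_addl _ _).
have e1 : (f y + m - a.*2 = (f y + m - a.*2.+1) + 1)%N by rewrite addn1 (subnSK (ltnW hK)).
rewrite /i1 /i2 e1 -[X in (_ == X %% _)%N]addn0 eq_sym.
by apply/negP; apply: neq_mod_succ; have := lt_m_1.
Qed.


Lemma fM' x y : f (x * y) = ((f x + f y) %% m)%N.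
Proof. exact: fM. Qed.

Definition sq t z := t * g ^+ f z * z^-1.
Definition rt t z := sq t z ^+ (#|N|.+1)./2.
Definition Xs t z i := (rt t z)^-1 * g ^+ i.

Lemma sq_in t z : t \in N -> sq t z \in N.
Proof.
move=> tN; rewrite /sq -mulgA groupM // -[g ^+ f z]invgK -invMg groupV.
exact: f_in'.
Qed.

Lemma rt_in t z : t \in N -> rt t z \in N.
Proof. by move=> tN; rewrite groupX ?sq_in. Qed.

Lemma half_N : ((#|N|.+1)./2 * 2 = #|N|.+1)%N.
Proof. by rewrite muln2 halfK /= oN. Qed.

Lemma pow_N w : w \in N -> w ^+ #|N|.+1 = w.
Proof. by move=> wN; rewrite expgS expg_cardG // mulg1. Qed.

Lemma rt_sq t z : t \in N -> rt t z ^+ 2 = sq t z.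
Proof. by move=> tN; rewrite /rt -expgM half_N pow_N ?sq_in. Qed.

Lemma sqrt_uniq w q : w \in N -> w ^+ 2 = q -> w = q ^+ (#|N|.+1)./2.
Proof. by move=> wN <-; rewrite -expgM mulnC half_N pow_N. Qed.

Lemma tau_sym x z :
  tau (x, x^-1 * z) = (g ^+ f x * x^-1) ^+ 2 * z * (g ^+ f z)^-1.
Proof.
have hz : f z = ((f x + f (x^-1 * z)) %% m)%N by rewrite -fM' mulKVg.
by rewrite /tau /W /= hz expg_mod_order expgS expg1 !mulgA.
Qed.

Lemma f_Xs t z i : t \in N -> (i < m)%N -> f (Xs t z i) = i.
Proof.
by move=> tN li; apply: fE' => //; rewrite /Xs mulgK groupV rt_in.
Qed.

Lemma tau_Xs t z i : t \in N -> (i < m)%N -> tau (Xs t z i, (Xs t z i)^-1 * z) = t.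
Proof.
move=> tN li; rewrite tau_sym f_Xs // /Xs invMg invgK mulgA mulgV mul1g rt_sq //.
by rewrite /sq mulgKV mulgK.
Qed.

Lemma tau_sym_eq t z x : t \in N -> tau (x, x^-1 * z) = t -> x = Xs t z (f x).
Proof.
rewrite tau_sym => tN h.
have w2 : (g ^+ f x * x^-1) ^+ 2 = sq t z by rewrite /sq -h mulgKV mulgK.
have hw := sqrt_uniq (gfx_in x) w2.
by rewrite /Xs /rt -hw invMg invgK mulgKV.
Qed.

Lemma sym_count a t z : t \in N -> (a.*2.+1 < m)%N ->
  #|[set c in [set d | lab d == (a, t)] | c.1 * c.2 == z]| = 2.
Proof.
move=> tN la.
have hm : m = (m./2).*2 by rewrite halfK (negbTE evg) subn0.
set h := m./2 in hm.
have la' : (a < h)%N by rewrite -ltn_double -hm (ltnW la).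
set s := f z.
set i1 := (((s + m - (a.*2 + odd s)) %% m)./2)%N; set i2 := (i1 + h)%N.
have li1h : (i1 < h)%N by rewrite ltn_half_double -hm ltn_pmod // order_gt0.
have li1 : (i1 < m)%N by rewrite hm -addnn (leq_trans li1h) // leq_addr.
have li2 : (i2 < m)%N by rewrite hm -addnn ltn_add2r.
have -> : [set c in [set d | lab d == (a, t)] | c.1 * c.2 == z] =
          [set (Xs t z i1, (Xs t z i1)^-1 * z); (Xs t z i2, (Xs t z i2)^-1 * z)].
  apply/setP => [[x y]]; rewrite !inE /= !xpair_eqE; apply/andP/orP.
  - case=> /andP[hd /eqP ht] /eqP hz.
    have ey : y = x^-1 * z by rewrite -hz mulKg.
    rewrite ey in ht hd; have ex := tau_sym_eq tN ht.
    have hs : ((f x + f (x^-1 * z)) %% m)%N = s by rewrite -fM' mulKVg.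
    move: hd; rewrite /dlt /= (symA hm (f_lt' x) (f_lt' _) hs la') -/s -/i1 -/i2 => /orP[] /eqP hi;
      move: ex; rewrite hi => ex; rewrite ey ex !eqxx; [by left | by right].
  - have hs i : (i < m)%N -> ((i + f ((Xs t z i)^-1 * z)) %% m)%N = s.
      by move=> li; rewrite -{1}(f_Xs z tN li) -fM' mulKVg.
    case=> /andP[/eqP -> /eqP ->]; rewrite mulKVg eqxx tau_Xs // eqxx !andbT;
      rewrite /dlt /= f_Xs //.
    + by rewrite (symA hm li1 (f_lt' _) (hs _ li1) la') -/s -/i1 eqxx.
    + by rewrite (symA hm li2 (f_lt' _) (hs _ li2) la') -/s -/i1 -/i2 eqxx orbT.
rewrite cards2; congr (_.+1); apply/eqP; rewrite eqb1.
apply/negP => /eqP [] /(congr1 f); rewrite !f_Xs // => /eqP.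
rewrite /i2 -{1}[i1]addn0 eqn_add2l => /eqP h0.
by move: la'; rewrite -h0 ltn0.
Qed.

Lemma plex_lab a t : t \in N -> (a.*2.+1 < m)%N -> is_kplex 2 [set d | lab d == (a, t)].
Proof.
move=> tN la; split.
- rewrite -sum1_card (@sum_fiber _ _ _ (fun c => c.1) 2 (fun _ => 1%N)).
    by rewrite sum1_card.
  by move=> x; apply: row_count.
- by move=> x; apply: row_count.
- by move=> y; apply: col_count.
- by move=> z; apply: sym_count.
Qed.

End Part2.

End MD.
Import MD.

Module ME.
Local Open Scope group_scope.

Lemma card_setU_pred (T : finType) (A B : {set T}) (p : pred T) :
  [disjoint A & B] ->
  #|[set c in A :|: B | p c]| = (#|[set c in A | p c]| + #|[set c in B | p c]|)%N.
Proof.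
move=> dAB; rewrite !setIdE setIUl cardsU.
suff -> : A :&: [set x | p x] :&: (B :&: [set x | p x]) = set0 by rewrite cards0 subn0.
apply/setP => x; rewrite !inE; apply/negbTE; apply/negP => /andP[/andP[xA _] /andP[xB _]].
by move: dAB; rewrite disjoint_subset => /subsetP /(_ x xA); rewrite inE xB.
Qed.

Lemma union_plex (gT : finGroupType) k (P1 P2 : {set gT * gT}) :
  [disjoint P1 & P2] -> is_kplex k P1 -> is_kplex 2 P2 -> is_kplex (k + 2) (P1 :|: P2).
Proof.
move=> d [c1 r1 l1 s1] [c2 r2 l2 s2]; split.
- rewrite cardsU c1 c2 mulnDl.
  suff -> : P1 :&: P2 = set0 by rewrite cards0 subn0.
  by apply/eqP; rewrite setI_eq0.
- by move=> x; rewrite card_setU_pred // r1 r2.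
- by move=> y; rewrite card_setU_pred // l1 l2.
- by move=> z; rewrite card_setU_pred // s1 s2.
Qed.

Lemma plex0 (gT : finGroupType) : is_kplex 0 (set0 : {set gT * gT}).
Proof.
have E (p : pred (gT * gT)) : #|[set c in (set0 : {set gT * gT}) | p c]| = 0%N.
  by apply/eqP; rewrite cards_eq0; apply/eqP/setP => c; rewrite !inE.
by split => //; rewrite cards0.
Qed.

Lemma plexes_from_partition (gT : finGroupType) (Q : {set {set gT * gT}}) :
  is_two_partition Q -> forall l, (l <= #|Q|)%N ->
  exists Q' : {set {set gT * gT}},
    [/\ Q' \subset Q, #|Q'| = l & is_kplex (2 * l) (cover Q')].
Proof.
case=> pQ hQ; elim=> [|l IH] hl.
  by exists set0; rewrite sub0set cards0 muln0 /cover big_set0; split => //; exact: plex0.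
have [Q' [sQ' cQ' pQ']] := IH (ltnW hl).
have : ~~ (Q \subset Q').
  apply/negP => sQ; move: (subset_leq_card sQ); rewrite cQ' leqNgt; by rewrite hl.
case/subsetPn => B BQ BQ'.
exists (B |: Q'); split.
- by rewrite subUset sub1set BQ sQ'.
- by rewrite cardsU1 BQ' cQ'.
- rewrite /cover big_setU1 //= setUC mulnSr.
  apply: union_plex (pQ') (hQ B BQ).
  rewrite -setI_eq0; apply/eqP/setP => c; rewrite !inE.
  apply/negbTE; apply/negP => /andP[/bigcupP[B' B'Q' cB'] cB].
  have nBB' : B' != B by apply: contraNneq BQ' => <-.
  have tQ : trivIset Q by case/and3P: pQ.
  have := trivIsetP tQ B' B (subsetP sQ' _ B'Q') BQ nBB'.
  rewrite disjoint_subset => /subsetP /(_ c cB'); by rewrite inE cB.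
Qed.

Lemma two_partition_ex (gT : finGroupType) (N : {group gT}) (g : gT)
  (nN : forall y, y \in 'N(N)) (oN : odd #|N|) (evg : ~~ odd #[g])
  (coNg : coprime #|N| #[g]) (cN : (#|N| * #[g])%N = #|gT|) :
  is_two_partition (preim_partition (lab N g) [set: gT * gT]).
Proof.
split; first exact: preim_partitionP.
move=> P; rewrite /preim_partition /equivalence_partition => /imsetP[c0 _ ->].
set a := (dlt N g c0)./2; set t := tau N g c0.
have -> : [set y in [set: gT * gT] | lab N g c0 == lab N g y] =
          [set d | lab N g d == (a, t)].
  by apply/setP => d; rewrite !inE eq_sym.
apply: plex_lab => //; first exact: tau_in.
have ld : (dlt N g c0 < #[g])%N by rewrite ltn_pmod // order_gt0.
have l2 : (a.*2 < #[g])%N.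
  apply: leq_ltn_trans ld; rewrite -geq_half_double //.
rewrite ltn_neqAle l2 andbT; apply/negP => /eqP e.
by move: evg; rewrite -e /= odd_double.
Qed.

End ME.
Import ME.

Unset Implicit Arguments.

Theorem theorem5p2 (gT : finGroupType)
  (hSyl : forall S : {group gT}, S \in ('Syl_2([set: gT]))%g ->
            (S :!=: 1)%g /\ cyclic S) :
  (forall k : nat, odd k -> forall P : {set gT * gT}, ~ is_kplex k P) /\
  (exists Q : {set {set gT * gT}}, is_two_partition Q) /\
  (forall k : nat, ~~ odd k -> k <= #|gT| -> exists P : {set gT * gT}, is_kplex k P).
Proof.
have [N [g [nN oN evg coNg cN]]] := structure hSyl.
split; first by move=> k ok P; exact: (no_odd_plex nN oN evg coNg cN ok).
have hQ := two_partition_ex nN oN evg coNg cN.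
split; first by eexists; exact: hQ.
move=> k ek kn.
set Q := preim_partition _ _ in hQ.
have cQ : (#|gT| * #|gT| = #|Q| * (2 * #|gT|))%N.
  have := card_partition hQ.1; rewrite cardsT card_prod => ->.
  rewrite (eq_bigr (fun _ => 2 * #|gT|)%N) ?sum_nat_const //.
  by move=> P PQ; case: (hQ.2 P PQ).
have n0 : 0 < #|gT| by rewrite (cardD1 1%g) inE.
have hk : k = (2 * k./2)%N by rewrite mul2n halfK (negbTE ek) subn0.
have hl : k./2 <= #|Q|.
  rewrite -(@leq_pmul2r (2 * #|gT|)) ?muln_gt0 // -cQ mulnA (mulnC _ 2) -hk.
  by rewrite leq_pmul2r.
have [Q' [_ _ pk]] := plexes_from_partition hQ hl.
by exists (cover Q'); rewrite hk.
Qed.
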